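(* Let $X$ be a continuous L-space with spatial part $Y$, and let $U\in{\sf ClopUp}(X)$. The following are equivalent: (1) $\ker U=\mathrm{core}\,U$; (2) $\mathrm{core}\,U$ is dense in $U$; (3) for each $y\in U\cap Y$ there is $V\in{\sf ClopSUp}(X)$ with $y\in V\subseteq U$; (4) for each Scott upset $F\subseteq\ker U$ there is $V\in{\sf ClopSUp}(X)$ with $F\subseteq V\subseteq U$.
   Context: A Priestley space is a Stone space $X$ with a partial order such that clopen upsets separate points. An L-space is a Priestley space in which the downset of each clopen set is clopen and the closure of each open upset is open. ${\sf ClopUp}(X)$ is the set of clopen upsets of $X$; $\mathrm{cl}$ denotes closure. The spatial part of $X$ is $Y=\{y\in X\mid{\downarrow}y\text{ is clopen}\}$. A Scott upset is a closed upset $F$ with $\min F\subseteq Y$; ${\sf ClopSUp}(X)$ is the set of clopen Scott upsets. For $U,V\in{\sf ClopUp}(X)$, write $V\ll U$ if for every open upset $W$ of $X$, $U\subseteq\mathrm{cl}\,W$ implies $V\subseteq W$. Define $\ker U=\bigcup\{V\in{\sf ClopUp}(X)\mid V\ll U\}$ and $\mathrm{core}\,U=\bigcup\{V\in{\sf ClopSUp}(X)\mid V\subseteq U\}$. $X$ is a continuous L-space if $\ker U$ is dense in $U$ for all $U\in{\sf ClopUp}(X)$. *)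

(* Defs.v *)
From mathcomp Require Import all_boot all_order.
From mathcomp Require Import all_classical all_reals all_analysis.
Set Implicit Arguments. Unset Strict Implicit. Unset Printing Implicit Defensive.
Local Open Scope classical_set_scope.

Section Priestley.
Context {T : topologicalType} (le : T -> T -> Prop).

Definition partial_order := [/\ (forall x, le x x),
  (forall x y, le x y -> le y x -> x = y) &
  (forall x y z, le x y -> le y z -> le x z)].

Definition stone_space := [/\ compact [set: T], hausdorff_space T &
  (forall (A : set T) x, open A -> A x ->
     exists B : set T, [/\ clopen B, B x & B `<=` A])].

Definition upset (A : set T) := forall x y, A x -> le x y -> A y.
Definition downset_of (A : set T) := [set x | exists2 y, A y & le x y].

Definition priestley := [/\ stone_space, partial_order &
  (forall x y, ~ le x y -> exists U : set T, [/\ clopen U, upset U, U x & ~ U y])].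

Definition Lspace := [/\ priestley,
  (forall U : set T, clopen U -> clopen (downset_of U)) &
  (forall U : set T, open U -> upset U -> open (closure U))].

Definition ClopUp (U : set T) := clopen U /\ upset U.

Definition spatial := [set y : T | clopen (downset_of [set y])].

Definition minimal (F : set T) := [set x | F x /\ forall z, F z -> le z x -> z = x].

Definition scott_upset (F : set T) := [/\ closed F, upset F & minimal F `<=` spatial].

Definition ClopSUp (U : set T) := clopen U /\ scott_upset U.

Definition way_below (V U : set T) :=
  forall W : set T, open W -> upset W -> U `<=` closure W -> V `<=` W.

Definition ker (U : set T) := [set x | exists V, [/\ ClopUp V, way_below V U & V x]].
Definition core (U : set T) := [set x | exists V, [/\ ClopSUp V, V `<=` U & V x]].

Definition dense_in (A B : set T) := A `<=` B /\ B `<=` closure A.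

Definition continuous_Lspace :=
  Lspace /\ forall U : set T, ClopUp U -> dense_in (ker U) U.
End Priestley.

(* Main.v *)
Require Import Defs.
From mathcomp Require Import all_boot all_order.
From mathcomp Require Import all_classical all_reals all_analysis.
Set Implicit Arguments. Unset Strict Implicit. Unset Printing Implicit Defensive.
Local Open Scope classical_set_scope.

Section Aux.
Context {T : topologicalType}.

Lemma directed_meet (I : Type) (D : set I) (f : I -> set T) :
  compact [set: T] -> (exists i, D i) -> (forall i, D i -> closed (f i)) ->
  (forall i, D i -> f i !=set0) ->
  (forall i j, D i -> D j -> exists2 k, D k & f k `<=` f i `&` f j) ->
  exists p, forall i, D i -> f i p.
Proof.
move=> Tc Dne fcl fne fdir.
have FF := filter_from_filter Dne fdir.
have PF := filter_from_proper FF fne.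
have [|p [_ cp]] := Tc _ PF; first by apply: filterT.
exists p => i Di; apply: fcl => // B nB.
by apply: cp => //; exists i.
Qed.

Lemma directed_cover (I : Type) (D : set I) (g : I -> set T) (K : set T) :
  compact [set: T] -> closed K -> (exists i, D i) -> (forall i, D i -> open (g i)) ->
  (forall i j, D i -> D j -> exists2 k, D k & g i `|` g j `<=` g k) ->
  K `<=` \bigcup_(i in D) g i ->
  exists2 i, D i & K `<=` g i.
Proof.
move=> Tc Kcl Dne gop gdir Kcov.
apply: contrapT => Hno.
have fne : forall i, D i -> (K `&` ~` g i) !=set0.
  move=> i Di; apply: contrapT => /set0P/negP; rewrite negbK => /eqP H.
  apply: Hno; exists i => // x Kx; apply: contrapT => ngx.
  by have : (K `&` ~` g i) x by []; rewrite H.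
have fdir : forall i j, D i -> D j -> exists2 k, D k & (K `&` ~` g k) `<=` (K `&` ~` g i) `&` (K `&` ~` g j).
  move=> i j Di Dj; have [k Dk sk] := gdir i j Di Dj.
  by exists k => // x [Kx ngx]; split; split => // h; apply: ngx; apply: sk; [left|right].
have [p Hp] := directed_meet Tc Dne (fun i Di => closedI Kcl (open_closedC (gop i Di))) fne fdir.
have [i Di] := Dne; have [Kp _] := Hp i Di.
have [j Dj gjp] := Kcov p Kp.
by have [_] := Hp j Dj.
Qed.
End Aux.


Section P.
Context {T : topologicalType} (le : T -> T -> Prop) (HP : priestley le).

Lemma P_compact : compact [set: T].
Proof. by case: HP => -[]. Qed.

Lemma P_refl x : le x x.
Proof. by case: HP => _ [] H _ _ _; apply: H. Qed.
Lemma P_anti x y : le x y -> le y x -> x = y.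
Proof. by case: HP => _ [] _ H _ _; apply: H. Qed.
Lemma P_trans x y z : le x y -> le y z -> le x z.
Proof. by case: HP => _ [] _ _ H _; apply: H. Qed.

Lemma down_closed c : closed (downset_of le [set c]).
Proof.
move=> y cly; apply: contrapT => ny.
have nle : ~ le y c by move=> h; apply: ny; exists c.
case: HP => _ _ /(_ _ _ nle) [V [[Vo _] Vup Vy Vc]].
have [z [[w -> zw] Vz]] := cly V (open_nbhs_nbhs (conj Vo Vy)).
by apply: Vc; apply: Vup Vz zw.
Qed.

Lemma min_exists (K : set T) x : closed K -> K x ->
  exists m, [/\ K m, le m x & forall z, K z -> le z m -> z = m].
Proof.
move=> Kcl Kx.
pose T' := {y : T | K y /\ le y x}.
pose R := fun a b : T' => `[< le (sval b) (sval a) >].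
have [t Ht] : exists t : T', forall s, R t s -> s = t.
  apply: (@Zorn T' R).
  - by move=> a; apply/asboolP; apply: P_refl.
  - by move=> a b c /asboolP ab /asboolP bc; apply/asboolP; apply: P_trans bc ab.
  - move=> [a Ha] [b Hb] /asboolP /= ab /asboolP /= ba.
    have e := P_anti ba ab; subst b; congr exist; exact: Prop_irrelevance.
  move=> A Atot.
  have [Ane|A0] := pselect (exists a, A a); last first.
    exists (exist _ x (conj Kx (P_refl x))) => s As; exfalso; apply: A0; by exists s.
  pose f := fun a : T' => K `&` downset_of le [set sval a].
  have fne : forall a : T', A a -> f a !=set0.
    move=> a _; exists (sval a); split; first exact: (proj1 (proj2_sig a)).
    by exists (sval a) => //; apply: P_refl.
  have fdir : forall a b, A a -> A b -> exists2 k, A k & f k `<=` f a `&` f b.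
    move=> a b Aa Ab; have [/asboolP ab|/asboolP ba] := Atot a b Aa Ab.
    * exists b => // z [Kz [_ -> zb]]; split; split => //.
        by exists (sval a) => //; apply: (P_trans zb).
      by exists (sval b).
    * exists a => // z [Kz [_ -> za]]; split; split => //.
        by exists (sval a).
      by exists (sval b) => //; apply: (P_trans za).
  have [p Hp] := directed_meet P_compact Ane
     (fun a _ => closedI Kcl (@down_closed (sval a))) fne fdir.
  have [a0 Aa0] := Ane; have [Kp [_ -> pa0]] := Hp a0 Aa0.
  have px : le p x by apply: P_trans pa0 (proj2 (proj2_sig a0)).
  exists (exist _ p (conj Kp px)) => s As; apply/asboolP => /=.
  by have [_ [_ -> ]] := Hp s As.
exists (sval t); split; [exact: (proj1 (proj2_sig t))|exact: (proj2 (proj2_sig t))|].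
move=> z Kz zt.
have zx : le z x by apply: P_trans zt (proj2 (proj2_sig t)).
have := Ht (exist _ z (conj Kz zx)) (asboolT zt).
by move=> /(congr1 sval).
Qed.
End P.


Section L.
Context {T : topologicalType} (le : T -> T -> Prop) (HX : continuous_Lspace le).

Let HL : Defs.Lspace le := proj1 HX.
Let HP : priestley le := let: And3 a _ _ := HL in a.
Let Hcont : forall U, ClopUp le U -> dense_in (ker le U) U := proj2 HX.

Lemma wb_sub V U : ClopUp le U -> way_below le V U -> V `<=` U.
Proof. by move=> [[Uo _] Uup] H; apply: H => //; apply: subset_closure. Qed.

Lemma ker_sub U : ClopUp le U -> ker le U `<=` U.
Proof. by move=> HU x [V [_ VU Vx]]; apply: (wb_sub HU VU). Qed.

Lemma wb_mono V U U' : way_below le V U -> U `<=` U' -> way_below le V U'.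
Proof. by move=> H s W Wo Wup sW; apply: H => // x /s /sW. Qed.

Lemma wb_subl V V' U : V' `<=` V -> way_below le V U -> way_below le V' U.
Proof. by move=> s H W Wo Wup sW x /s; apply: H. Qed.

Lemma wb_union V1 V2 U : way_below le V1 U -> way_below le V2 U ->
  way_below le (V1 `|` V2) U.
Proof. by move=> H1 H2 W Wo Wup sW x [/(H1 W Wo Wup sW)|/(H2 W Wo Wup sW)]. Qed.

Lemma wb0 U : way_below le set0 U.
Proof. by move=> W _ _ _ x. Qed.

Lemma ClopUp0 : ClopUp le set0.
Proof. by split; [exact: clopen0|move=> x y]. Qed.

Lemma ClopUpU V1 V2 : ClopUp le V1 -> ClopUp le V2 -> ClopUp le (V1 `|` V2).
Proof.
move=> [c1 u1] [c2 u2]; split; first exact: clopenU.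
by move=> x y [/u1 H|/u2 H] xy; [left|right]; apply: H.
Qed.

Lemma ker_open U : open (ker le U).
Proof.
rewrite openE => x [V [cV VU Vx]].
have [[Vo _] _] := cV.
apply: filterS (open_nbhs_nbhs (conj Vo Vx)) => y Vy.
by exists V; split.
Qed.

Lemma ker_up U : upset le (ker le U).
Proof. by move=> x y [V [[Vc Vup] VU Vx]] xy; exists V; split => //; apply: Vup Vx xy. Qed.

Lemma ker_mono U U' : U `<=` U' -> ker le U `<=` ker le U'.
Proof. by move=> s x [V [HV VU Vx]]; exists V; split => //; apply: wb_mono VU s. Qed.

Lemma closure_up O : open O -> upset le O -> upset le (closure O).
Proof.
move=> Oo Oup z w zc zw; apply: contrapT => nw.
have [_ Hd Hcl] := HL.
have Eo : clopen (~` closure O).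
  split; first by apply: closed_openC; apply: closed_closure.
  by rewrite -openC setCK; apply: Hcl.
have [Do _] := Hd _ Eo.
have Dz : downset_of le (~` closure O) z by exists w.
have [y1 [Oy1 [v nv ov]]] := zc _ (open_nbhs_nbhs (conj Do Dz)).
by apply: nv; apply: subset_closure; apply: Oup Oy1 ov.
Qed.

Lemma interp V U : ClopUp le V -> ClopUp le U -> way_below le V U ->
  exists W, [/\ ClopUp le W, way_below le V W & way_below le W U].
Proof.
move=> HV HU VU.
have Tc := P_compact HP.
pose D := [set W | ClopUp le W /\ way_below le W U].
have Dne : exists W, D W by exists set0; split; [exact: ClopUp0|exact: wb0].
have Dun : forall W1 W2, D W1 -> D W2 -> D (W1 `|` W2).
  by move=> W1 W2 [c1 w1] [c2 w2]; split; [exact: ClopUpU|exact: wb_union].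
pose G := \bigcup_(W in D) ker le W.
have Go : open G by apply: bigcup_open => W _; exact: ker_open.
have Gup : upset le G.
  by move=> x y [W DW kx] xy; exists W => //; apply: ker_up kx xy.
have UG : U `<=` closure G.
  move=> x Ux.
  have kG : ker le U `<=` closure G.
    move=> z [W' [cW' W'U W'z]].
    have [_ d] := Hcont cW'.
    have : closure (ker le W') `<=` closure G.
      by apply: closureS => y ky; exists W'.
    by apply; apply: d.
  have [_ d] := Hcont HU.
  have := closureS kG (d x Ux).
  by apply: closed_closure.
have VG := VU G Go Gup UG.
have gdir : forall W1 W2, D W1 -> D W2 -> exists2 k, D k & ker le W1 `|` ker le W2 `<=` ker le k.
  move=> W1 W2 D1 D2; exists (W1 `|` W2); first exact: Dun.
  by move=> x [k|k]; [exact: (ker_mono (@subsetUl _ W1 W2) k)|exact: (ker_mono (@subsetUr _ W1 W2) k)].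
have [W DW VW] := directed_cover Tc (proj2 (proj1 HV)) Dne (fun W _ => ker_open W) gdir VG.
pose D2 := [set V' | ClopUp le V' /\ way_below le V' W].
have D2ne : exists V', D2 V' by exists set0; split; [exact: ClopUp0|exact: wb0].
have V2 : V `<=` \bigcup_(i in D2) i.
  by move=> x /VW [V' [cV' V'W V'x]]; exists V'.
have g2dir : forall W1 W2, D2 W1 -> D2 W2 -> exists2 k, D2 k & W1 `|` W2 `<=` k.
  move=> W1 W2 [c1 w1] [c2 w2]; exists (W1 `|` W2) => //.
  by split; [exact: ClopUpU|exact: wb_union].
have [V' [cV' V'W] VV'] := directed_cover Tc (proj2 (proj1 HV)) D2ne
   (fun V' H => proj1 (proj1 (proj1 H))) g2dir V2.
exists W; split => //; first exact: (proj1 DW).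
  exact: wb_subl VV' V'W.
exact: (proj2 DW).
Qed.
End L.


Section M.
Context {T : topologicalType} (le : T -> T -> Prop) (HX : continuous_Lspace le).

Let HL : Defs.Lspace le := proj1 HX.
Let HP : priestley le := let: And3 a _ _ := HL in a.
Let Hcont : forall U, ClopUp le U -> dense_in (ker le U) U := proj2 HX.

Lemma ClopSUp_wb V U : ClopSUp le V -> V `<=` U -> way_below le V U.
Proof.
move=> [[Vo Vcl] [_ Vup Vmin]] VU W Wo Wup UW y Vy; apply: contrapT => nWy.
have Kcl : closed (V `&` ~` W) by apply: closedI Vcl (open_closedC Wo).
have [m [[Vm nWm] my mmin]] := min_exists HP Kcl (conj Vy nWy).
have msp : spatial le m.
  apply: Vmin; split => // z Vz zm; apply: mmin => //; split => // Wz.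
  by apply: nWm; apply: Wup Wz zm.
have [Do _] := msp.
have Dm : downset_of le [set m] m by exists m => //; apply: P_refl HP m.
have [w [Ww [m' -> wm]]] := UW m (VU m Vm) _ (open_nbhs_nbhs (conj Do Dm)).
by apply: nWm; apply: Wup Ww wm.
Qed.

Lemma ker_scott U V : ClopUp le U -> ClopUp le V -> way_below le V U ->
  exists F, [/\ scott_upset le F, V `<=` F & F `<=` ker le U].
Proof.
move=> HU HV VU.
have step : forall W, exists W', (ClopUp le W /\ way_below le V W) ->
    [/\ ClopUp le W', way_below le V W' & way_below le W' W].
  move=> W; case: (pselect (ClopUp le W /\ way_below le V W)) => [[cW VW]|nW].
    by have [W' H] := interp HX HV cW VW; exists W'.
  by exists set0 => h; exfalso; apply: nW h.
have [f Hf] := choice step.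
pose s := fun n => iter n f U.
have inv : forall n, ClopUp le (s n) /\ way_below le V (s n).
  elim => [|n [c w]] /=; first by split.
  by have [] := Hf (s n) (conj c w).
have sdec : forall n, way_below le (s n.+1) (s n).
  by move=> n; have [c w] := inv n; have [] := Hf _ (conj c w).
have ssub : forall n, s n.+1 `<=` s n.
  by move=> n; apply: wb_sub (proj1 (inv n)) (sdec n).
have smono : forall m n, (m <= n)%N -> s n `<=` s m.
  move=> m n mn; rewrite -(subnK mn); elim: (n - m)%N => [|k IH].
    by rewrite add0n.
  by rewrite addSn; apply: subset_trans (ssub _) IH.
pose F := [set x | forall n, s n x].
exists F; split.
- split.
  + move=> x clx n; have [[[_ scl] _] _] := inv n.
    have sF : F `<=` s n by move=> y; apply.
    exact: scl _ (closureS sF clx).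

  + by move=> x y Fx xy n; have [[_ sup] _] := inv n; apply: sup (Fx n) xy.
  + move=> m [Fm mmin].
    pose Dm := downset_of le [set m].
    have Dcl : closed Dm := @down_closed _ _ HP m.
    pose O := ~` Dm.
    have Oo : open O := closed_openC Dcl.
    have Oup : upset le O.
      move=> a b Oa ab [c /= -> bc]; apply: Oa; exists m => //.
      exact: (@P_trans T le HP a b m ab bc).
    have Dmm : Dm m by exists m => //; apply: P_refl HP m.
    case: (pselect (closure O m)) => [mc|nmc].
      have FO : F `<=` closure O.
        move=> y Fy; case: (pselect (le y m)) => [ym|nym].
          by rewrite (mmin y Fy ym).
        by apply: subset_closure => -[c /= -> yc].
      have [N HN] : exists N, s N `<=` closure O.
        apply: contrapT => Hno.
        pose g := fun n => s n `&` ~` closure O.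
        have gne : forall n, [set: nat] n -> g n !=set0.
          move=> n _; apply: contrapT => ne; apply: Hno; exists n => x sx.
          apply: contrapT => nx; apply: ne; by exists x.
        have gdir : forall i j, [set: nat] i -> [set: nat] j ->
            exists2 k, [set: nat] k & g k `<=` g i `&` g j.
          move=> i j _ _; exists (maxn i j) => // x [sx nx]; split; split => //.
            by apply: smono sx; rewrite leq_maxl.
          by apply: smono sx; rewrite leq_maxr.
        have gcl : forall n, [set: nat] n -> closed (g n).
          move=> n _; apply: closedI; first exact: (proj2 (proj1 (proj1 (inv n)))).
          by apply: open_closedC; case: HL => _ _ Hcl; apply: Hcl.
        have [p Hp] := directed_meet (P_compact HP) (ex_intro _ 0%N I) gcl gne gdir.
        have Fp : F p by move=> n; have [] := Hp n I.
        by have [_] := Hp 0%N I; apply; apply: FO.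
      by exfalso; apply: (sdec N O Oo Oup HN m (Fm N.+1)); exact: Dmm.
    split; last exact: Dcl.
    have -> : downset_of le [set m] = ~` closure O.
      apply/seteqP; split => x.
        move=> Dx cx; apply: nmc; apply: (closure_up HX Oo Oup cx).
        by case: Dx => c /= -> .
      move=> ncx; apply: contrapT => nDx; apply: ncx; exact: subset_closure.
    by apply: closed_openC; apply: closed_closure.
- by move=> x Vx n; apply: wb_sub (proj1 (inv n)) (proj2 (inv n)) _ Vx.
- move=> x Fx; exists (s 1%N); split; [exact: (proj1 (inv 1%N))|exact: sdec 0%N|exact: Fx].
Qed.
End M.

Unset Implicit Arguments. Set Strict Implicit.


Theorem lemma4p6 (T : topologicalType) (le : T -> T -> Prop)
  (HX : continuous_Lspace le) (U : set T) (HU : ClopUp le U) :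
  [<-> ker le U = core le U;
       dense_in (core le U) U;
       (forall y, U y -> spatial le y ->
          exists V, [/\ ClopSUp le V, V y & V `<=` U]);
       (forall F : set T, scott_upset le F -> F `<=` ker le U ->
          exists V, [/\ ClopSUp le V, F `<=` V & V `<=` U])].
Proof.
have HL : Defs.Lspace le := proj1 HX.
have HP : priestley le by case: HL.
have Hcont := proj2 HX.
tfae.
- by move=> E; have := Hcont U HU; rewrite E.
- move=> [cs Ucl] y Uy ysp.
  have [Do _] := ysp.
  have Dy : downset_of le [set y] y by exists y => //; apply: (@P_refl T le HP y).
  have [z [[V [cV VU Vz]] [y' /= -> zy]]] := Ucl y Uy _ (open_nbhs_nbhs (conj Do Dy)).
  exists V; split => //.
  by have [_ [_ Vup _]] := cV; apply: Vup Vz zy.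
- move=> H3 F [Fcl Fup Fmin] Fk.
  pose D := [set V | ClopSUp le V /\ V `<=` U].
  have Dne : exists V, D V.
    exists set0; split => //; split; first exact: clopen0.
    by split; [exact: closed0|move=> x y []|move=> x [[]]].
  have gdir : forall V1 V2, D V1 -> D V2 -> exists2 k, D k & V1 `|` V2 `<=` k.
    move=> V1 V2 [[c1 [_ u1 m1]] s1] [[c2 [_ u2 m2]] s2].
    exists (V1 `|` V2) => //; split; last by move=> x [/s1|/s2].
    split; first exact: clopenU.
    split; first exact: (proj2 (clopenU c1 c2)).
      by move=> x y [/u1 H|/u2 H] xy; [left|right]; apply: H.
    move=> x [[V1x|V2x] xmin].
      by apply: m1; split => // z V1z zx; apply: xmin => //; left.
    by apply: m2; split => // z V2z zx; apply: xmin => //; right.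
  have cov : F `<=` \bigcup_(i in D) i.
    move=> x Fx.
    have [m [Fm mx mmin]] := min_exists HP Fcl Fx.
    have msp := Fmin m (conj Fm mmin).
    have [V [cV Vm VU]] := H3 m (ker_sub HU (Fk m Fm)) msp.
    exists V; first by split.
    by have [_ [_ Vup _]] := cV; apply: Vup Vm mx.
  have [V [cV VU] FV] := directed_cover (P_compact HP) Fcl Dne
    (fun V H => proj1 (proj1 (proj1 H))) gdir cov.
  by exists V; split.
- move=> H4; apply/seteqP; split.
    move=> x [V [cV VU Vx]].
    have [F [sF VF Fk]] := ker_scott HX HU cV VU.
    have [W [cW FW WU]] := H4 F sF Fk.
    by exists W; split => //; apply: FW; apply: VF.
  move=> x [V [cV VU Vx]]; exists V; split => //.
    by split; [exact: (proj1 cV)|have [_ []] := cV].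
  exact: (ClopSUp_wb HX cV VU).
Qed.
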